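(* For every set of formulas $\Phi\cup\{\varphi\}$: $$\Phi\vdash_{L5}\varphi\iff \Phi\Vdash_{L5}\varphi\iff\Phi\Vdash^{Kr}_{L5}\varphi.$$
   Context: Formulas are built from a countable set $V$ of propositional variables using $\wedge,\vee,\rightarrow,\bot$ and the unary modal operator $\square$. Abbreviations: - $\neg\varphi:=\varphi\rightarrow\bot$; - $\top:=\neg\bot$; - $\varphi\leftrightarrow\psi:=(\varphi\rightarrow\psi)\wedge(\psi\rightarrow\varphi)$; - $\varphi\equiv\psi:=\square(\varphi\rightarrow\psi)\wedge\square(\psi\rightarrow\varphi)$. Deductive system $L5$. The axioms are all instances of the schemes: (i) all formulas having the form of a theorem of intuitionistic propositional logic (possibly containing $\square$); (ii) $\square\varphi\rightarrow\varphi$; (iii) $\square(\varphi\rightarrow\psi)\rightarrow(\square(\psi\rightarrow\chi)\rightarrow\square(\varphi\rightarrow\chi))$; (iv) $\square(\varphi\vee\psi)\rightarrow(\square\varphi\vee\square\psi)$; (v) $\square\varphi\rightarrow\square\square\varphi$; (vi) $\neg\square\varphi\rightarrow\square\neg\square\varphi$. In addition, all formulas $(\varphi\equiv\psi)\rightarrow(\chi[x:=\varphi]\equiv\chi[x:=\psi])$ (where $\chi[x:=\varphi]$ replaces every occurrence of variable $x$ in $\chi$ by $\varphi$) and all formulas $\varphi\vee\neg\varphi$ are added as theorems. The inference rules are: - Modus Ponens; - Axiom Necessitation: from an axiom of the form (i)–(vi) infer $\square$ of it. This rule applies only to axioms of the forms (i)–(vi). $\Phi\vdash_{L5}\varphi$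 means $\varphi$ is derivable from $\Phi$. $L5$-models: a structure $\mathcal{M}=(M,\mathit{TRUE},f_\bot,f_\top,f_\rightarrow,f_\vee,f_\wedge,f_\square)$ such that $(M,f_\bot,f_\top,f_\rightarrow,f_\vee,f_\wedge)$ is a Heyting algebra (order $\le$). Moreover, $\mathit{TRUE}\subseteq M$ is an ultrafilter, and for all $m,m',m''$: - $f_\square(m)\le m$; - $f_\square(f_\rightarrow(m,m'))\le f_\rightarrow(f_\square(f_\rightarrow(m',m'')),f_\square(f_\rightarrow(m,m'')))$; - $f_\square(f_\vee(m,m'))\le f_\vee(f_\square(m),f_\square(m'))$; - $f_\square(m)\in\mathit{TRUE}$ iff $m=f_\top$; - $f_\square(m)=f_\top$ if $m=f_\top$ and $f_\square(m)=f_\bot$ otherwise. Assignments $\gamma\colon V\to M$ extend homomorphically to all formulas ($\gamma(\bot)=f_\bot$, $\gamma(\square\varphi)=f_\square(\gamma(\varphi))$, $\gamma(\varphi*\psi)=f_*(\gamma(\varphi),\gamma(\psi))$). $(\mathcal{M},\gamma)\vDash\varphi$ iff $\gamma(\varphi)\in\mathit{TRUE}$. $\Phi\Vdash_{L5}\varphi$ means that for every $L5$-model $\mathcal{M}$ and assignment $\gamma$, if $(\mathcal{M},\gamma)$ satisfies all of $\Phi$ then it satisfies $\varphi$. $L5$-frames: a pair $(W,R)$ such that: - $W\neq\emptyset$; - $R$ is a partial order on $W$ with a smallest element $w_B$; - every $R$-chain has an upper bound in $W$. Assignments are $g\colon V\to\mathrm{Pow}(W)$ that are upward closed along $R$. Kripke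 satisfaction: - $\bot$ is never true; - $(w,g)\vDash x$ iff $w\in g(x)$; - $\vee,\wedge$ are pointwise; - $(w,g)\vDash\varphi\rightarrow\psi$ iff for all $w'$ with $wRw'$, $(w',g)\vDash\varphi$ implies $(w',g)\vDash\psi$; - $(w,g)\vDash\square\varphi$ iff $(w_B,g)\vDash\varphi$. $\Phi\Vdash^{Kr}_{L5}\varphi$ means: for every $L5$-frame $(W,R)$, every assignment $g$ and every $R$-maximal world $w_T\in W$, if $(w_T,g)\vDash\psi$ for all $\psi\in\Phi$ then $(w_T,g)\vDash\varphi$. *)

(* Defs.v *)
Inductive formula : Type :=
| Var : nat -> formula
| Bot : formula
| And : formula -> formula -> formula
| Or  : formula -> formula -> formula
| Imp : formula -> formula -> formula
| Box : formula -> formula.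

Definition Neg (p : formula) : formula := Imp p Bot.
Definition Top : formula := Neg Bot.
Definition Iff (p q : formula) : formula := And (Imp p q) (Imp q p).
Definition Equiv (p q : formula) : formula := And (Box (Imp p q)) (Box (Imp q p)).

Fixpoint subst (x : nat) (phi chi : formula) : formula :=
  match chi with
  | Var y => if Nat.eqb x y then phi else Var y
  | Bot => Bot
  | And a b => And (subst x phi a) (subst x phi b)
  | Or a b => Or (subst x phi a) (subst x phi b)
  | Imp a b => Imp (subst x phi a) (subst x phi b)
  | Box a => Box (subst x phi a)
  end.

(* Formulas having the form of a theorem of intuitionistic propositional
   logic (possibly containing □): theorems of a standard Hilbert calculus
   for IPC whose schemes are instantiated by arbitrary formulas of the full
   language (subformulas □ψ behave as atoms). *)
Inductive ipc_thm : formula -> Prop :=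
| ipc_K  : forall a b, ipc_thm (Imp a (Imp b a))
| ipc_S  : forall a b c,
    ipc_thm (Imp (Imp a (Imp b c)) (Imp (Imp a b) (Imp a c)))
| ipc_A1 : forall a b, ipc_thm (Imp (And a b) a)
| ipc_A2 : forall a b, ipc_thm (Imp (And a b) b)
| ipc_A3 : forall a b, ipc_thm (Imp a (Imp b (And a b)))
| ipc_O1 : forall a b, ipc_thm (Imp a (Or a b))
| ipc_O2 : forall a b, ipc_thm (Imp b (Or a b))
| ipc_O3 : forall a b c,
    ipc_thm (Imp (Imp a c) (Imp (Imp b c) (Imp (Or a b) c)))
| ipc_EFQ : forall a, ipc_thm (Imp Bot a)
| ipc_MP : forall a b, ipc_thm a -> ipc_thm (Imp a b) -> ipc_thm b.

Inductive L5_axiom : formula -> Prop :=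
| ax_i   : forall p, ipc_thm p -> L5_axiom p
| ax_ii  : forall p, L5_axiom (Imp (Box p) p)
| ax_iii : forall p q r,
    L5_axiom (Imp (Box (Imp p q)) (Imp (Box (Imp q r)) (Box (Imp p r))))
| ax_iv  : forall p q, L5_axiom (Imp (Box (Or p q)) (Or (Box p) (Box q)))
| ax_v   : forall p, L5_axiom (Imp (Box p) (Box (Box p)))
| ax_vi  : forall p, L5_axiom (Imp (Neg (Box p)) (Box (Neg (Box p)))).

Inductive L5_deriv (Phi : formula -> Prop) : formula -> Prop :=
| d_hyp : forall p, Phi p -> L5_deriv Phi p
| d_ax  : forall p, L5_axiom p -> L5_deriv Phi p
| d_substthm : forall x p q chi,
    L5_deriv Phi (Imp (Equiv p q) (Equiv (subst x p chi) (subst x q chi)))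
| d_lem : forall p, L5_deriv Phi (Or p (Neg p))
| d_nec : forall p, L5_axiom p -> L5_deriv Phi (Box p)
| d_mp  : forall p q, L5_deriv Phi p -> L5_deriv Phi (Imp p q) -> L5_deriv Phi q.

Section Algebra.
Variable M : Type.
Variables (bot top : M) (imp join meet : M -> M -> M).

Definition hle (a b : M) : Prop := meet a b = a.

Definition is_heyting : Prop :=
  (forall a b, meet a b = meet b a) /\
  (forall a b c, meet a (meet b c) = meet (meet a b) c) /\
  (forall a b, join a b = join b a) /\
  (forall a b c, join a (join b c) = join (join a b) c) /\
  (forall a b, meet a (join a b) = a) /\
  (forall a b, join a (meet a b) = a) /\
  (forall a, hle bot a) /\
  (forall a, hle a top) /\
  (forall a b c, hle (meet c a) b <-> hle c (imp a b)).

Definition is_filter (F : M -> Prop) : Prop :=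
  F top /\
  (forall a b, F a -> hle a b -> F b) /\
  (forall a b, F a -> F b -> F (meet a b)).

Definition is_proper_filter (F : M -> Prop) : Prop := is_filter F /\ ~ F bot.

Definition is_ultrafilter (F : M -> Prop) : Prop :=
  is_proper_filter F /\
  (forall G, is_proper_filter G -> (forall x, F x -> G x) -> forall x, G x -> F x).
End Algebra.

Definition is_L5_model (M : Type) (TRUE : M -> Prop) (fbot ftop : M)
  (fimp fjoin fmeet : M -> M -> M) (fbox : M -> M) : Prop :=
  is_heyting M fbot ftop fimp fjoin fmeet /\
  is_ultrafilter M fbot ftop fmeet TRUE /\
  (forall m, hle M fmeet (fbox m) m) /\
  (forall m m' m'', hle M fmeet (fbox (fimp m m'))
       (fimp (fbox (fimp m' m'')) (fbox (fimp m m'')))) /\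
  (forall m m', hle M fmeet (fbox (fjoin m m')) (fjoin (fbox m) (fbox m'))) /\
  (forall m, TRUE (fbox m) <-> m = ftop) /\
  (forall m, (m = ftop -> fbox m = ftop) /\ (m <> ftop -> fbox m = fbot)).

Fixpoint eval (M : Type) (fbot : M) (fimp fjoin fmeet : M -> M -> M)
  (fbox : M -> M) (gamma : nat -> M) (p : formula) : M :=
  match p with
  | Var x => gamma x
  | Bot => fbot
  | And a b => fmeet (eval M fbot fimp fjoin fmeet fbox gamma a)
                     (eval M fbot fimp fjoin fmeet fbox gamma b)
  | Or a b => fjoin (eval M fbot fimp fjoin fmeet fbox gamma a)
                    (eval M fbot fimp fjoin fmeet fbox gamma b)
  | Imp a b => fimp (eval M fbot fimp fjoin fmeet fbox gamma a)
                    (eval M fbot fimp fjoin fmeet fbox gamma b)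
  | Box a => fbox (eval M fbot fimp fjoin fmeet fbox gamma a)
  end.

Definition L5_conseq (Phi : formula -> Prop) (phi : formula) : Prop :=
  forall (M : Type) (TRUE : M -> Prop) (fbot ftop : M)
         (fimp fjoin fmeet : M -> M -> M) (fbox : M -> M),
    is_L5_model M TRUE fbot ftop fimp fjoin fmeet fbox ->
    forall gamma : nat -> M,
      (forall psi, Phi psi -> TRUE (eval M fbot fimp fjoin fmeet fbox gamma psi)) ->
      TRUE (eval M fbot fimp fjoin fmeet fbox gamma phi).

(* (W, R) is an L5-frame with smallest element wB (wB is unique by
   antisymmetry, so it is passed explicitly). *)
Definition is_L5_frame (W : Type) (R : W -> W -> Prop) (wB : W) : Prop :=
  (exists w : W, True) /\
  (forall w, R w w) /\
  (forall u v, R u v -> R v u -> u = v) /\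
  (forall u v w, R u v -> R v w -> R u w) /\
  (forall w, R wB w) /\
  (forall C : W -> Prop,
      (forall x y, C x -> C y -> R x y \/ R y x) ->
      exists u, forall x, C x -> R x u).

Fixpoint forces (W : Type) (R : W -> W -> Prop) (wB : W) (g : nat -> W -> Prop)
  (w : W) (p : formula) : Prop :=
  match p with
  | Var x => g x w
  | Bot => False
  | And a b => forces W R wB g w a /\ forces W R wB g w b
  | Or a b => forces W R wB g w a \/ forces W R wB g w b
  | Imp a b => forall w', R w w' -> forces W R wB g w' a -> forces W R wB g w' b
  | Box a => forces W R wB g wB a
  end.

Definition Kr_conseq (Phi : formula -> Prop) (phi : formula) : Prop :=
  forall (W : Type) (R : W -> W -> Prop) (wB : W),
    is_L5_frame W R wB ->
    forall g : nat -> W -> Prop,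
      (forall x u v, R u v -> g x u -> g x v) ->
      forall wT : W, (forall w, R wT w -> w = wT) ->
        (forall psi, Phi psi -> forces W R wB g wT psi) ->
        forces W R wB g wT phi.

(* Main.v *)
Require Import Defs.
From Stdlib Require Import Classical FunctionalExtensionality PropExtensionality ProofIrrelevance Lia Cantor.

Ltac hd H := destruct H as (mc & ma & jc & ja & ab1 & ab2 & hb & ht & adj); unfold hle in *.


Lemma h_idem M bot top imp join meet : is_heyting M bot top imp join meet ->
  forall a, meet a a = a.
Proof. intro H; hd H; intro a. rewrite <- (ab2 a a) at 2. apply ab1. Qed.

Lemma h_refl M bot top imp join meet : is_heyting M bot top imp join meet ->
  forall a, hle M meet a a.
Proof. intros H a; apply (h_idem _ _ _ _ _ _ H). Qed.

Lemma h_trans M bot top imp join meet : is_heyting M bot top imp join meet ->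
  forall a b c, hle M meet a b -> hle M meet b c -> hle M meet a c.
Proof. intro H; hd H; intros a b c h1 h2. rewrite <- h1, <- ma, h2. reflexivity. Qed.

Lemma h_antisym M bot top imp join meet : is_heyting M bot top imp join meet ->
  forall a b, hle M meet a b -> hle M meet b a -> a = b.
Proof. intro H; hd H; intros a b h1 h2. transitivity (meet a b); [symmetry; exact h1| rewrite mc; exact h2]. Qed.

Lemma h_meet_l M bot top imp join meet : is_heyting M bot top imp join meet ->
  forall a b, hle M meet (meet a b) a.
Proof. intro H; pose proof (h_idem _ _ _ _ _ _ H) as id; hd H; intros a b.
 rewrite (mc a b), <- ma, id. reflexivity. Qed.

Lemma h_meet_r M bot top imp join meet : is_heyting M bot top imp join meet ->
  forall a b, hle M meet (meet a b) b.
Proof. intro H; pose proof (h_idem _ _ _ _ _ _ H) as id; hd H; intros a b.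
 rewrite <- ma, id. reflexivity. Qed.

Lemma h_glb M bot top imp join meet : is_heyting M bot top imp join meet ->
  forall a b c, hle M meet c a -> hle M meet c b -> hle M meet c (meet a b).
Proof. intro H; hd H; intros a b c h1 h2. rewrite ma, h1, h2. reflexivity. Qed.

Lemma h_join_le M bot top imp join meet : is_heyting M bot top imp join meet ->
  forall a c, hle M meet a c <-> join a c = c.
Proof. intro H; hd H; intros a c; split; intro h.
 - rewrite <- h, jc, mc. apply ab2.
 - rewrite <- h. apply ab1. Qed.

Lemma h_join_l M bot top imp join meet : is_heyting M bot top imp join meet ->
  forall a b, hle M meet a (join a b).
Proof. intro H; hd H; intros a b. apply ab1. Qed.

Lemma h_join_r M bot top imp join meet : is_heyting M bot top imp join meet ->
  forall a b, hle M meet b (join a b).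
Proof. intro H; hd H; intros a b. rewrite jc. apply ab1. Qed.

Lemma h_lub M bot top imp join meet : is_heyting M bot top imp join meet ->
  forall a b c, hle M meet a c -> hle M meet b c -> hle M meet (join a b) c.
Proof. intro H; pose proof (h_join_le _ _ _ _ _ _ H) as J; intros a b c h1 h2.
 apply J in h1; apply J in h2; apply J. destruct H as (mc & ma & jc & ja & _).
 rewrite <- ja, h2, h1. reflexivity. Qed.

Lemma h_top_meet M bot top imp join meet : is_heyting M bot top imp join meet ->
  forall a, meet top a = a.
Proof. intro H; hd H; intro a. rewrite mc. apply ht. Qed.

Lemma h_top_eq M bot top imp join meet : is_heyting M bot top imp join meet ->
  forall a, hle M meet top a -> a = top.
Proof. intros H a h. apply (h_antisym _ _ _ _ _ _ H); [destruct H as (_&_&_&_&_&_&_&ht&_); apply ht| exact h]. Qed.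

Lemma h_imp_top M bot top imp join meet : is_heyting M bot top imp join meet ->
  forall a b, imp a b = top <-> hle M meet a b.
Proof. intros H a b. pose proof (h_top_meet _ _ _ _ _ _ H) as tm.
 split; intro h.
 - pose proof H as H0. destruct H as (mc & ma & jc & ja & ab1 & ab2 & hb & ht & adj).
   assert (hle M meet top (imp a b)) as H1 by (rewrite h; apply (h_idem M bot top imp join meet); assumption).
   apply adj in H1. rewrite tm in H1. exact H1.
 - apply (h_top_eq _ _ _ _ _ _ H). destruct H as (mc & ma & jc & ja & ab1 & ab2 & hb & ht & adj).
   apply adj. rewrite tm. exact h. Qed.

Lemma h_mp M bot top imp join meet : is_heyting M bot top imp join meet ->
  forall a b, hle M meet (meet (imp a b) a) b.
Proof. intros H a b. pose proof (h_refl _ _ _ _ _ _ H (imp a b)). destruct H as (_&_&_&_&_&_&_&_&adj). apply adj. auto. Qed.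

Lemma h_meet_mono M bot top imp join meet : is_heyting M bot top imp join meet ->
  forall a b c d, hle M meet a c -> hle M meet b d -> hle M meet (meet a b) (meet c d).
Proof. intros H a b c d h1 h2. apply (h_glb _ _ _ _ _ _ H).
 - eapply (h_trans _ _ _ _ _ _ H); [apply (h_meet_l _ _ _ _ _ _ H)|exact h1].
 - eapply (h_trans _ _ _ _ _ _ H); [apply (h_meet_r _ _ _ _ _ _ H)|exact h2]. Qed.

Lemma h_imp_bot_l M bot top imp join meet : is_heyting M bot top imp join meet ->
  forall a, imp bot a = top.
Proof. intros H a. apply (h_imp_top _ _ _ _ _ _ H). destruct H as (_&_&_&_&_&_&hb&_); apply hb. Qed.

Lemma h_imp_top_r M bot top imp join meet : is_heyting M bot top imp join meet ->
  forall a, imp a top = top.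
Proof. intros H a. apply (h_imp_top _ _ _ _ _ _ H). destruct H as (_&_&_&_&_&_&_&ht&_); apply ht. Qed.

Lemma h_imp_refl M bot top imp join meet : is_heyting M bot top imp join meet ->
  forall a, imp a a = top.
Proof. intros H a. apply (h_imp_top _ _ _ _ _ _ H). apply (h_refl _ _ _ _ _ _ H). Qed.

Lemma h_meet_bot_l M bot top imp join meet : is_heyting M bot top imp join meet ->
  forall a, meet bot a = bot.
Proof. intros H a. destruct H as (_&_&_&_&_&_&hb&_); apply hb. Qed.

Lemma h_meet_bot_r M bot top imp join meet : is_heyting M bot top imp join meet ->
  forall a, meet a bot = bot.
Proof. intros H a. destruct H as (mc&_&_&_&_&_&hb&_). rewrite mc; apply hb. Qed.

Lemma h_imp_top_bot M bot top imp join meet : is_heyting M bot top imp join meet ->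
  imp top bot = bot.
Proof. intros H. apply (h_antisym _ _ _ _ _ _ H).
 - assert (h : hle M meet (meet (imp top bot) top) bot).
   { pose proof (h_refl _ _ _ _ _ _ H) as rf. destruct H as (_&_&_&_&_&_&_&_&adj). apply adj. apply rf. }
   destruct H as (mc&_&_&_&_&_&_&ht&_). unfold hle in *. rewrite (ht (imp top bot)) in h. exact h.
 - destruct H as (_&_&_&_&_&_&hb&_); apply hb. Qed.


Lemma ipc_sound M bot top imp join meet (fbox : M -> M) gamma :
  is_heyting M bot top imp join meet ->
  forall p, ipc_thm p -> eval M bot imp join meet fbox gamma p = top.
Proof.
 intros H p hp.
 pose proof (h_idem _ _ _ _ _ _ H) as id.
 pose proof (h_refl _ _ _ _ _ _ H) as rf.
 pose proof (h_trans _ _ _ _ _ _ H) as tr.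
 pose proof (h_meet_l _ _ _ _ _ _ H) as ml.
 pose proof (h_meet_r _ _ _ _ _ _ H) as mr.
 pose proof (h_glb _ _ _ _ _ _ H) as glb.
 pose proof (h_join_l _ _ _ _ _ _ H) as jl.
 pose proof (h_join_r _ _ _ _ _ _ H) as jr.
 pose proof (h_lub _ _ _ _ _ _ H) as lub.
 pose proof (h_imp_top _ _ _ _ _ _ H) as it.
 pose proof (h_mp _ _ _ _ _ _ H) as mp.
 pose proof (h_mono := h_meet_mono _ _ _ _ _ _ H).
 pose proof (h_top_eq _ _ _ _ _ _ H) as teq.
 pose proof (h_top_meet _ _ _ _ _ _ H) as tm.
 destruct H as (mc & ma & jc & ja & ab1 & ab2 & hb & ht & adj).
 assert (adjR : forall a b c, hle M meet (meet c a) b -> hle M meet c (imp a b)) by (intros; apply adj; auto).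
 assert (adjL : forall a b c, hle M meet c (imp a b) -> hle M meet (meet c a) b) by (intros; apply adj; auto).
 induction hp; simpl; try (apply it).
 - apply adjR. apply ml.
 - apply adjR. apply adjR.
   set (X := imp _ _). set (Y := imp _ _).
   eapply tr; [|apply (mp (eval M bot imp join meet fbox gamma b))].
   apply glb.
   + eapply tr; [apply h_mono; [apply (ml X Y)|apply rf]|]. apply mp.
   + eapply tr; [apply h_mono; [apply (mr X Y)|apply rf]|]. apply mp.
 - apply ml.
 - apply mr.
 - apply adjR. apply rf.
 - apply jl.
 - apply jr.
 - apply adjR. apply adjR. rewrite mc. apply adjL. apply lub; apply adjR; rewrite mc.
   + eapply tr; [apply h_mono; [apply ml|apply rf]|]. apply mp.
   + eapply tr; [apply h_mono; [apply mr|apply rf]|]. apply mp.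
 - apply hb.
 - simpl in IHhp2. rewrite IHhp1 in IHhp2. apply it in IHhp2. apply teq. exact IHhp2.
Qed.


Lemma eval_subst M bot imp join meet (fbox : M -> M) gamma x p chi :
  eval M bot imp join meet fbox gamma (subst x p chi) =
  eval M bot imp join meet fbox
    (fun y => if Nat.eqb x y then eval M bot imp join meet fbox gamma p else gamma y) chi.
Proof. induction chi; simpl; try congruence. destruct (Nat.eqb x n); reflexivity. Qed.

Lemma lem_ultra M bot top imp join meet (F : M -> Prop) :
  is_heyting M bot top imp join meet -> is_ultrafilter M bot top meet F ->
  forall a, F (join a (imp a bot)).
Proof.
 intros H [[[Ft [Fup Fm]] Fb] Fmax] a.
 pose proof (h_join_l _ _ _ _ _ _ H) as jl.
 pose proof (h_join_r _ _ _ _ _ _ H) as jr.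
 pose proof (h_trans _ _ _ _ _ _ H) as tr.
 pose proof (h_meet_l _ _ _ _ _ _ H) as ml.
 pose proof (h_meet_r _ _ _ _ _ _ H) as mr.
 pose proof (h_glb _ _ _ _ _ _ H) as glb.
 pose proof (h_meet_mono _ _ _ _ _ _ H) as mono.
 pose proof (h_top_meet _ _ _ _ _ _ H) as tm.
 pose proof (h_refl _ _ _ _ _ _ H) as rf.
 destruct (classic (F a)) as [Fa|nFa]. { eapply Fup; [exact Fa| apply jl]. }
 destruct (classic (exists f, F f /\ hle M meet (meet f a) bot)) as [[f [Ff hf]]|nex].
 - apply Fup with (imp a bot); [|apply jr]. apply Fup with f; [exact Ff|].
   destruct H as (_&_&_&_&_&_&_&_&adj). apply adj. exact hf.
 - exfalso. apply nFa.
   set (G := fun x => exists f, F f /\ hle M meet (meet f a) x).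
   apply (Fmax G).
   + split; [split; [|split]|].
     * exists top. split; [exact Ft|]. destruct H as (_&_&_&_&_&_&_&ht&_); apply ht.
     * intros x y [f [Ff h1]] h2. exists f; split; auto. eapply tr; eauto.
     * intros x y [f [Ff h1]] [g [Fg h2]]. exists (meet f g). split; auto.
       apply glb; eapply tr; try eassumption; apply mono; auto.
     * intros [f [Ff h]]. apply nex. eauto.
   + intros x Fx. exists x; split; auto.
   + exists top; split; [exact Ft|]. rewrite tm. apply rf.
Qed.

Lemma ax_sound M TRUE bot top imp join meet fbox gamma :
  is_L5_model M TRUE bot top imp join meet fbox ->
  forall p, L5_axiom p -> eval M bot imp join meet fbox gamma p = top.
Proof.
 intros [H [Hu [b1 [b3 [b4 [btrue bval]]]]]] p hp.
 pose proof (h_imp_top _ _ _ _ _ _ H) as it.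
 pose proof (h_refl _ _ _ _ _ _ H) as rf.
 assert (hb : forall a, hle M meet bot a) by (destruct H as (_&_&_&_&_&_&hb&_); exact hb).
 destruct hp; simpl; try (apply it).
 - apply ipc_sound; auto.
 - apply b1.
 - apply b3.
 - apply b4.
 - set (m := eval _ _ _ _ _ _ _ _). destruct (classic (m = top)) as [e|e].
   + rewrite (proj1 (bval m) e). rewrite (proj1 (bval top) eq_refl). apply rf.
   + rewrite (proj2 (bval m) e). apply hb.
 - set (m := eval _ _ _ _ _ _ _ _). destruct (classic (m = top)) as [e|e].
   + rewrite (proj1 (bval m) e). rewrite (h_imp_top_bot _ _ _ _ _ _ H). apply hb.
   + rewrite (proj2 (bval m) e). rewrite (h_imp_refl _ _ _ _ _ _ H).
     rewrite (proj1 (bval top) eq_refl). apply rf.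
Qed.

Lemma subst_sound M TRUE bot top imp join meet fbox gamma :
  is_L5_model M TRUE bot top imp join meet fbox ->
  forall x p q chi, eval M bot imp join meet fbox gamma
     (Imp (Equiv p q) (Equiv (subst x p chi) (subst x q chi))) = top.
Proof.
 intros [H [Hu [b1 [b3 [b4 [btrue bval]]]]]] x p q chi. simpl.
 rewrite !eval_subst.
 set (P := eval M bot imp join meet fbox gamma p).
 set (Q := eval M bot imp join meet fbox gamma q).
 destruct (classic (P = Q)) as [e|e].
 - rewrite e, !(h_imp_refl _ _ _ _ _ _ H). reflexivity.
 - destruct (classic (imp P Q = top)) as [e1|e1].
   + assert (imp Q P <> top) as e2.
     { intro e2. apply e. apply (h_antisym _ _ _ _ _ _ H); apply (h_imp_top _ _ _ _ _ _ H); auto. }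
     rewrite (proj2 (bval _) e2), (h_meet_bot_r _ _ _ _ _ _ H). apply (h_imp_bot_l _ _ _ _ _ _ H).
   + rewrite (proj2 (bval _) e1), (h_meet_bot_l _ _ _ _ _ _ H). apply (h_imp_bot_l _ _ _ _ _ _ H).
Qed.

Lemma D_to_A Phi phi : L5_deriv Phi phi -> L5_conseq Phi phi.
Proof.
 intros D M TRUE fbot ftop fimp fjoin fmeet fbox HM gamma HPhi.
 pose proof HM as [H [Hu [b1 [b3 [b4 [btrue bval]]]]]].
 pose proof Hu as [[[Ft [Fup Fm]] Fb] Fmax].
 induction D.
 - auto.
 - rewrite (ax_sound _ _ _ _ _ _ _ _ gamma HM _ H0). exact Ft.
 - rewrite (subst_sound _ _ _ _ _ _ _ _ gamma HM). exact Ft.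
 - apply (lem_ultra _ _ _ _ _ _ _ H Hu).
 - simpl. rewrite (ax_sound _ _ _ _ _ _ _ _ gamma HM _ H0), (proj1 (bval ftop) eq_refl). exact Ft.
 - simpl in IHD2. eapply Fup; [apply Fm; [exact IHD2| exact IHD1]|]. apply (h_mp _ _ _ _ _ _ H).
Qed.


Definition UP {W : Type} (R : W -> W -> Prop) :=
  {U : W -> Prop | forall u v, R u v -> U u -> U v}.

Lemma UP_ext {W} (R : W -> W -> Prop) (U V : UP R) :
  (forall w, proj1_sig U w <-> proj1_sig V w) -> U = V.
Proof.
 destruct U as [U hU], V as [V hV]; simpl; intro h.
 assert (U = V) by (apply functional_extensionality; intro; apply propositional_extensionality; auto).
 subst. f_equal. apply proof_irrelevance.
Qed.

Definition up_meet {W} (R : W -> W -> Prop) (U V : UP R) : UP R.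
Proof. exists (fun w => proj1_sig U w /\ proj1_sig V w).
 intros u v r [h1 h2]; split; [apply (proj2_sig U u v) | apply (proj2_sig V u v)]; auto. Defined.
Definition up_join {W} (R : W -> W -> Prop) (U V : UP R) : UP R.
Proof. exists (fun w => proj1_sig U w \/ proj1_sig V w).
 intros u v r [h1|h2]; [left; apply (proj2_sig U u v) | right; apply (proj2_sig V u v)]; auto. Defined.
Definition up_imp {W} (R : W -> W -> Prop) (Rt : forall u v w, R u v -> R v w -> R u w)
  (U V : UP R) : UP R.
Proof. exists (fun w => forall w', R w w' -> proj1_sig U w' -> proj1_sig V w').
 intros u v r h w' r' hu. apply h; eauto. Defined.
Definition up_bot {W} (R : W -> W -> Prop) : UP R.
Proof. exists (fun _ => False). auto. Defined.
Definition up_top {W} (R : W -> W -> Prop) : UP R.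
Proof. exists (fun _ => True). auto. Defined.
Definition up_box {W} (R : W -> W -> Prop) (U : UP R) : UP R.
Proof. exists (fun _ => forall v, proj1_sig U v). auto. Defined.

Lemma up_hle {W} (R : W -> W -> Prop) (U V : UP R) :
  hle (UP R) (up_meet R) U V <-> (forall w, proj1_sig U w -> proj1_sig V w).
Proof. unfold hle; split.
 - intros e w h. rewrite <- e in h. simpl in h. tauto.
 - intro h. apply UP_ext. simpl. intro w; split; [tauto|]. auto.
Qed.

Lemma forces_persist W R wB g (Rt : forall u v w, R u v -> R v w -> R u w)
  (gup : forall x u v, R u v -> g x u -> g x v) :
  forall p u v, R u v -> forces W R wB g u p -> forces W R wB g v p.
Proof. induction p; simpl; intros u v r h; eauto.
 - destruct h; split; eauto.
 - destruct h; [left|right]; eauto.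
Qed.

Lemma A_to_K Phi phi : L5_conseq Phi phi -> Kr_conseq Phi phi.
Proof.
 intros A W R wB F g gup wT wTmax HPhi.
 destruct F as (ne & Rr & Ra & Rt & Rb & Rc).
 set (gamma := fun x => exist (fun U => forall u v, R u v -> U u -> U v) (g x) (gup x) : UP R).
 assert (EV : forall p w, proj1_sig (eval (UP R) (up_bot R) (up_imp R Rt) (up_join R) (up_meet R) (up_box R) gamma p) w <-> forces W R wB g w p).
 { induction p; intro w; simpl.
   - tauto.
   - tauto.
   - rewrite IHp1, IHp2; tauto.
   - rewrite IHp1, IHp2; tauto.
   - split; intros h w' r; specialize (h w' r); rewrite IHp1, IHp2 in *; auto.
   - split; intro h; [apply IHp; apply h|]. intro v. apply IHp.
     apply (forces_persist W R wB g Rt gup p wB v (Rb v)). exact h. }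
 apply EV.
 apply (A (UP R) (fun U => proj1_sig U wT) (up_bot R) (up_top R) (up_imp R Rt) (up_join R) (up_meet R) (up_box R)).
 2: { intros psi hpsi. apply EV. auto. }
 assert (HH : is_heyting (UP R) (up_bot R) (up_top R) (up_imp R Rt) (up_join R) (up_meet R)).
 { repeat split; intros; try (apply UP_ext; simpl; intros; tauto).
   - apply up_hle. pose proof (proj1 (up_hle R _ _) H) as H'; clear H; rename H' into H. simpl in *. intros w hc w' r ha. apply H. split; auto.
     apply (proj2_sig c w w'); auto.
   - pose proof (proj1 (up_hle R _ _) H) as H'; clear H; rename H' into H. apply up_hle. simpl in *. intros w [hc ha]. apply (H w hc w); auto. }
 split; [exact HH|].
 split.
 { split; [split; [split; [|split]|]|].
   - simpl; auto.
   - intros a b ha hab. pose proof (proj1 (up_hle R _ _) hab) as hab'. auto.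
   - intros a b ha hb. simpl; auto.
   - simpl; auto.
   - intros G [[Gt [Gup Gm]] Gb] hsub x Gx.
     apply NNPP; intro nx.
     assert (proj1_sig (up_imp R Rt x (up_bot R)) wT) as hn.
     { simpl. intros w' r hx. apply wTmax in r. subst. auto. }
     apply Gb. apply Gup with (up_meet R x (up_imp R Rt x (up_bot R))).
     + apply Gm; auto.
     + apply up_hle. simpl. intros w [h1 h2]. apply (h2 w (Rr w) h1). }
 split. { intro m. apply up_hle. simpl. auto. }
 split. { intros m m' m''. apply up_hle. simpl. intros w h w' r h2 v w'' r'' hm. apply (h2 v w''); auto. apply (h v w''); auto. }
 split. { intros m m'. apply up_hle. simpl. intros w h.
   destruct (h wB) as [h1|h1]; [left|right]; intro v;
   [apply (proj2_sig m wB v) | apply (proj2_sig m' wB v)]; auto. }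
 split. { intro m. simpl. split.
   - intro h. apply UP_ext. simpl. intros; split; auto.
   - intros e. subst. simpl. auto. }
 intro m; split.
 - intro e; subst. apply UP_ext; simpl. intros; split; auto.
 - intro ne'. apply UP_ext; simpl. intros; split; [|tauto]. intro h. apply ne'.
   apply UP_ext; simpl. intros; split; auto.
Qed.


Definition ext (G : formula -> Prop) (a : formula) : formula -> Prop := fun x => G x \/ x = a.

Inductive IDer (G : formula -> Prop) : formula -> Prop :=
| i_hyp : forall p, G p -> IDer G p
| i_ipc : forall p, ipc_thm p -> IDer G p
| i_mp : forall p q, IDer G p -> IDer G (Imp p q) -> IDer G q.

Lemma ipc_I a : ipc_thm (Imp a a).
Proof. eapply ipc_MP; [apply (ipc_K a a)|]. eapply ipc_MP; [apply (ipc_K a (Imp a a))|]. apply ipc_S. Qed.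

Lemma IDer_mono G H p : (forall x, G x -> H x) -> IDer G p -> IDer H p.
Proof. intros h d; induction d; [apply i_hyp; auto|apply i_ipc; auto|]. eapply i_mp; [exact IHd1|exact IHd2]. Qed.

Lemma IDer_ded G a b : IDer (ext G a) b -> IDer G (Imp a b).
Proof. intro d; induction d.
 - destruct H as [h|h].
   + eapply i_mp; [apply i_hyp, h| apply i_ipc, ipc_K].
   + subst; apply i_ipc, ipc_I.
 - eapply i_mp; [apply i_ipc, H| apply i_ipc, ipc_K].
 - eapply i_mp; [exact IHd1|]. eapply i_mp; [exact IHd2|]. apply i_ipc, ipc_S.
Qed.

Lemma IDer_empty p : IDer (fun _ => False) p -> ipc_thm p.
Proof. intro d; induction d; [contradiction|auto|]. eapply ipc_MP; [exact IHd1|exact IHd2]. Qed.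

Lemma IDer_directed (I : Type) (F : I -> formula -> Prop) (i0 : I)
  (dir : forall i j, exists k, (forall x, F i x -> F k x) /\ (forall x, F j x -> F k x)) p :
  IDer (fun x => exists i, F i x) p -> exists i, IDer (F i) p.
Proof. intro d; induction d.
 - destruct H as [i h]; exists i; apply i_hyp; auto.
 - exists i0; apply i_ipc; auto.
 - destruct IHd1 as [i h1], IHd2 as [j h2]. destruct (dir i j) as [k [k1 k2]].
   exists k. eapply i_mp; [eapply IDer_mono; [exact k1|exact h1]|eapply IDer_mono; [exact k2|exact h2]].
Qed.

Lemma L5_mono G H p : (forall x, G x -> H x) -> L5_deriv G p -> L5_deriv H p.
Proof. intros h d; induction d; try (constructor; auto; fail). eapply d_mp; [exact IHd1|exact IHd2]. Qed.

Lemma L5_ded G a b : L5_deriv (ext G a) b -> L5_deriv G (Imp a b).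
Proof. intro d; induction d;
 try (eapply d_mp; [|apply d_ax, ax_i, ipc_K]; constructor; auto; fail).
 - destruct H as [h|h].
   + eapply d_mp; [apply d_hyp, h| apply d_ax, ax_i, ipc_K].
   + subst; apply d_ax, ax_i, ipc_I.
 - eapply d_mp; [exact IHd1|]. eapply d_mp; [exact IHd2|]. apply d_ax, ax_i, ipc_S.
Qed.

Lemma L5_directed (I : Type) (F : I -> formula -> Prop) (i0 : I)
  (dir : forall i j, exists k, (forall x, F i x -> F k x) /\ (forall x, F j x -> F k x)) p :
  L5_deriv (fun x => exists i, F i x) p -> exists i, L5_deriv (F i) p.
Proof. intro d; induction d; try (exists i0; constructor; auto; fail).
 - destruct H as [i h]; exists i; apply d_hyp; auto.
 - destruct IHd1 as [i h1], IHd2 as [j h2]. destruct (dir i j) as [k [k1 k2]].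
   exists k. eapply d_mp; [eapply L5_mono; [exact k1|exact h1]|eapply L5_mono; [exact k2|exact h2]].
Qed.

Lemma IDer_L5 G p : IDer G p -> L5_deriv G p.
Proof. intro d; induction d; [apply d_hyp; auto|apply d_ax, ax_i; auto|]. eapply d_mp; [exact IHd1|exact IHd2]. Qed.

Fixpoint enc (p : formula) : nat :=
  match p with
  | Var x => to_nat (0, x)
  | Bot => to_nat (1, 0)
  | And a b => to_nat (2, to_nat (enc a, enc b))
  | Or a b => to_nat (3, to_nat (enc a, enc b))
  | Imp a b => to_nat (4, to_nat (enc a, enc b))
  | Box a => to_nat (5, enc a)
  end.

Fixpoint dec (f n : nat) : formula :=
  match f with
  | 0 => Bot
  | S f =>
    match of_nat n with
    | (0, x) => Var x
    | (2, q) => let (i, j) := of_nat q in And (dec f i) (dec f j)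
    | (3, q) => let (i, j) := of_nat q in Or (dec f i) (dec f j)
    | (4, q) => let (i, j) := of_nat q in Imp (dec f i) (dec f j)
    | (5, q) => Box (dec f q)
    | _ => Bot
    end
  end.

Fixpoint depth (p : formula) : nat :=
  match p with
  | Var _ | Bot => 0
  | And a b | Or a b | Imp a b => S (Nat.max (depth a) (depth b))
  | Box a => S (depth a)
  end.

Lemma dec_enc p : forall f, depth p < f -> dec f (enc p) = p.
Proof. induction p; intros [|f] h; cbn -[to_nat of_nat] in *; try lia; rewrite ?cancel_of_to; try reflexivity.
 - rewrite IHp1, IHp2 by lia; reflexivity.
 - rewrite IHp1, IHp2 by lia; reflexivity.
 - rewrite IHp1, IHp2 by lia; reflexivity.
 - rewrite IHp by lia; reflexivity.
Qed.

Definition enum (k : nat) : formula := let (f, n) := of_nat k in dec f n.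

Lemma enum_surj p : exists k, enum k = p.
Proof. exists (to_nat (S (depth p), enc p)). unfold enum. rewrite cancel_of_to. apply dec_enc. lia. Qed.


Fixpoint lchain (Cn : (formula -> Prop) -> formula -> Prop) (G0 : formula -> Prop) (goal : formula) (n : nat)
  : formula -> Prop :=
  match n with
  | 0 => G0
  | S n => fun x => lchain Cn G0 goal n x \/
             (x = enum n /\ ~ Cn (ext (lchain Cn G0 goal n) (enum n)) goal)
  end.

Lemma lchain_mono Cn G0 goal n m : n <= m -> forall x, lchain Cn G0 goal n x -> lchain Cn G0 goal m x.
Proof. induction 1; auto. intros x h; simpl; left; auto. Qed.

Lemma lindenbaum (Cn : (formula -> Prop) -> formula -> Prop)
  (mono : forall G H p, (forall x, G x -> H x) -> Cn G p -> Cn H p)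
  (directed : forall (F : nat -> formula -> Prop),
     (forall i j, exists k, (forall x, F i x -> F k x) /\ (forall x, F j x -> F k x)) ->
     forall p, Cn (fun x => exists i, F i x) p -> exists i, Cn (F i) p)
  G0 goal : ~ Cn G0 goal ->
  exists D, (forall x, G0 x -> D x) /\ ~ Cn D goal /\ (forall x, ~ Cn (ext D x) goal -> D x).
Proof.
 intro h0.
 set (L := lchain Cn G0 goal).
 assert (Ln : forall n, ~ Cn (L n) goal).
 { induction n; simpl; auto. intro c.
   destruct (classic (Cn (ext (L n) (enum n)) goal)) as [c1|c1].
   - apply IHn. eapply mono; [|exact c]. intros x [hx|[_ hx]]; auto. contradiction.
   - apply c1. eapply mono; [|exact c]. intros x [hx|[hx _]]; [left|right]; auto. }
 exists (fun x => exists n, L n x). split; [|split].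
 - intros x hx; exists 0; exact hx.
 - intro c. apply directed in c.
   + destruct c as [i c]. apply (Ln i c).
   + intros i j; exists (Nat.max i j); split; apply lchain_mono; lia.
 - intros x nc. destruct (enum_surj x) as [k ek]. exists (S k). simpl. right. split; auto.
   intro c. apply nc. eapply mono; [|exact c].
   intros y [hy|hy]; [left; exists k; exact hy|right; subst; reflexivity].
Qed.


Definition good (T : formula -> Prop) :=
  (forall p, L5_deriv T p -> T p) /\ (forall p, T p \/ T (Neg p)) /\ ~ T Bot.


Lemma T_mp T : good T -> forall a b, T a -> T (Imp a b) -> T b.
Proof. intros [cl _] a b h1 h2. apply cl. apply (d_mp _ a b); apply d_hyp; auto. Qed.
Lemma T_ax T : good T -> forall a, L5_axiom a -> T a.
Proof. intros [cl _] a h. apply cl. apply d_ax; auto. Qed.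
Lemma T_ipc T : good T -> forall a, ipc_thm a -> T a.
Proof. intros HT a h. apply T_ax; auto. apply ax_i; auto. Qed.
Lemma T_nec T : good T -> forall a, L5_axiom a -> T (Box a).
Proof. intros [cl _] a h. apply cl. apply d_nec; auto. Qed.
Lemma T_IDer T : good T -> forall p, IDer T p -> T p.
Proof. intros [cl _] p d. apply cl, IDer_L5, d. Qed.

Lemma T_and T : good T -> forall a b, T (And a b) <-> T a /\ T b.
Proof. intros HT a b; split.
 - intro h; split; [apply (T_mp T HT (And a b) a h)|apply (T_mp T HT (And a b) b h)]; apply T_ipc; auto; constructor.
 - intros [h1 h2]. apply (T_mp T HT b); [exact h2|]. apply (T_mp T HT a); [exact h1|]. apply T_ipc; auto; constructor.
Qed.

Lemma T_or T : good T -> forall a b, T (Or a b) -> T a \/ T b.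
Proof. intros HT a b h. pose proof HT as (cl & comp & cons).
 destruct (comp a) as [ha|na]; auto. destruct (comp b) as [hb|nb]; auto.
 exfalso. apply cons. apply T_IDer; auto.
 eapply i_mp; [apply i_hyp; exact h|].
 eapply i_mp; [apply i_hyp; exact nb|].
 eapply i_mp; [apply i_hyp; exact na|]. apply i_ipc, ipc_O3.
Qed.

Lemma ipc_top_imp a : ipc_thm (Imp (Imp Top a) a).
Proof. apply IDer_empty. apply IDer_ded. eapply i_mp; [apply i_ipc, ipc_I|]. apply i_hyp. right; reflexivity. Qed.

Lemma T_box_top T : good T -> forall a, T (Imp (Box a) (Box (Imp Top a))) /\ T (Imp (Box (Imp Top a)) (Box a)).
Proof. intros HT a.
 assert (E : T (Equiv a (Imp Top a))).
 { unfold Equiv. apply T_and; auto. split; apply T_nec; auto; apply ax_i; [apply ipc_K|apply ipc_top_imp]. }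
 assert (S : T (Equiv (subst 0 a (Box (Var 0))) (subst 0 (Imp Top a) (Box (Var 0))))).
 { apply (T_mp T HT (Equiv a (Imp Top a))); [exact E|]. apply (proj1 HT). apply d_substthm. }
 simpl in S. unfold Equiv in S. apply T_and in S; auto. destruct S as [S1 S2].
 split; [apply (T_mp T HT _ _ S1)|apply (T_mp T HT _ _ S2)]; apply T_ax; auto; apply ax_ii.
Qed.

Definition BB (T : formula -> Prop) : formula -> Prop := fun a => T (Box a).

Lemma B_mp T : good T -> forall a b, BB T a -> BB T (Imp a b) -> BB T b.
Proof. intros HT a b h1 h2. unfold BB in *.
 destruct (T_box_top T HT a) as [A1 _]. destruct (T_box_top T HT b) as [_ B2].
 assert (H : T (Box (Imp Top a))) by (exact (T_mp T HT _ _ h1 A1)).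
 apply (T_mp T HT _ _ (T_mp T HT _ _ h2 (T_mp T HT _ _ H (T_ax T HT _ (ax_iii Top a b)))) B2).
Qed.

Lemma B_IDer T : good T -> forall p, IDer (BB T) p -> BB T p.
Proof. intros HT p d; induction d; auto.
 - unfold BB; apply T_nec; auto. apply ax_i; auto.
 - exact (B_mp T HT p q IHd1 IHd2).
Qed.

Lemma B_T T : good T -> forall a, BB T a -> T a.
Proof. intros HT a h. exact (T_mp T HT _ _ h (T_ax T HT _ (ax_ii a))). Qed.

Lemma B_box T : good T -> forall a, BB T a -> BB T (Box a).
Proof. intros HT a h. unfold BB in *. exact (T_mp T HT _ _ h (T_ax T HT _ (ax_v a))). Qed.

Lemma B_nbox T : good T -> forall a, ~ BB T a -> BB T (Neg (Box a)).
Proof. intros HT a h. unfold BB in *. destruct ((proj1 (proj2 HT)) (Box a)) as [x|x]; [contradiction|].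
 exact (T_mp T HT _ _ x (T_ax T HT _ (ax_vi a))). Qed.

Lemma B_or T : good T -> forall a b, BB T (Or a b) -> BB T a \/ BB T b.
Proof. intros HT a b h. unfold BB in *. apply T_or; auto. exact (T_mp T HT _ _ h (T_ax T HT _ (ax_iv a b))). Qed.

Lemma B_cons T : good T -> ~ BB T Bot.
Proof. intros HT h. apply B_T in h; auto. apply (proj2 (proj2 HT)) in h; auto. Qed.


Definition world (T w : formula -> Prop) : Prop :=
  (forall x, BB T x -> w x) /\ (forall p, IDer w p -> w p) /\
  (forall a b, w (Or a b) -> w a \/ w b) /\ ~ w Bot.

Lemma w_mp T w : world T w -> forall a b, w a -> w (Imp a b) -> w b.
Proof. intros (_ & cl & _) a b h1 h2. apply cl. apply (i_mp _ a b); apply i_hyp; auto. Qed.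
Lemma w_ipc T w : world T w -> forall a, ipc_thm a -> w a.
Proof. intros (_ & cl & _) a h. apply cl, i_ipc, h. Qed.

Lemma prime_ext T w : world T w -> forall a b, ~ w (Imp a b) ->
  exists w', world T w' /\ (forall x, w x -> w' x) /\ w' a /\ ~ w' b.
Proof.
 intros Hw a b nab. pose proof Hw as (HB & Hcl & Hpr & Hcons).
 destruct (lindenbaum IDer IDer_mono
   (fun F dir p d => IDer_directed nat F 0 dir p d) (ext w a) b) as [D [h0 [nD mx]]].
 { intro d. apply nab. apply Hcl. apply IDer_ded, d. }
 assert (Dcl : forall p, IDer D p -> D p).
 { intros p d. apply mx. intro d2. apply nD. apply (i_mp _ p b); [exact d|]. apply IDer_ded, d2. }
 exists D. split; [|split; [|split]].
 - split; [|split; [|split]].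
   + intros x hx. apply h0. left. apply HB, hx.
   + exact Dcl.
   + intros x y hxy. apply NNPP; intro nn. apply nD.
     assert (IDer (ext D x) b) as d1 by (apply NNPP; intro c; apply nn; left; apply mx, c).
     assert (IDer (ext D y) b) as d2 by (apply NNPP; intro c; apply nn; right; apply mx, c).
     apply IDer_ded in d1. apply IDer_ded in d2.
     apply (i_mp _ (Or x y)); [apply i_hyp, hxy|].
     apply (i_mp _ (Imp y b)); [exact d2|].
     apply (i_mp _ (Imp x b)); [exact d1|]. apply i_ipc, ipc_O3.
   + intro hb. apply nD. apply (i_mp _ Bot); [apply i_hyp, hb|]. apply i_ipc, ipc_EFQ.
 - intros x hx. apply h0. left; exact hx.
 - apply h0. right; reflexivity.
 - intro hb. apply nD. apply i_hyp, hb.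
Qed.


Definition CW T := {w : formula -> Prop | world T w}.
Definition CR T (u v : CW T) : Prop := forall x, proj1_sig u x -> proj1_sig v x.
Definition Cg T (x : nat) (w : CW T) : Prop := proj1_sig w (Var x).

Lemma B_world T : good T -> world T (BB T).
Proof. intro HT. split; [auto|split; [|split]].
 - apply B_IDer; auto.
 - apply B_or; auto.
 - apply B_cons; auto.
Qed.

Lemma T_world T : good T -> world T T.
Proof. intro HT. split; [|split; [|split]].
 - apply B_T; auto.
 - apply T_IDer; auto.
 - apply T_or; auto.
 - apply (proj2 (proj2 HT)).
Qed.

Lemma CW_ext T (u v : CW T) : (forall x, proj1_sig u x <-> proj1_sig v x) -> u = v.
Proof.
 destruct u as [U hU], v as [V hV]; simpl; intro h.
 assert (U = V) by (apply functional_extensionality; intro; apply propositional_extensionality; auto).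
 subst. f_equal. apply proof_irrelevance.
Qed.

Lemma truth T (HT : good T) : forall p (w : CW T),
  forces (CW T) (CR T) (exist _ (BB T) (B_world T HT)) (Cg T) w p <-> proj1_sig w p.
Proof.
 induction p; intros [w Hw]; simpl.
 - unfold Cg; tauto.
 - split; [tauto|]. intro h. apply (proj2 (proj2 (proj2 Hw)) h).
 - rewrite IHp1, IHp2. split.
   + intros [h1 h2]. apply (w_mp T _ Hw _ _ h2). apply (w_mp T _ Hw _ _ h1). apply (w_ipc T _ Hw); constructor.
   + intro h. split; [apply (w_mp T _ Hw _ _ h)|apply (w_mp T _ Hw _ _ h)]; apply (w_ipc T _ Hw); constructor.
 - rewrite IHp1, IHp2. split.
   + intros [h|h]; [apply (w_mp T _ Hw _ _ h)|apply (w_mp T _ Hw _ _ h)]; apply (w_ipc T _ Hw); constructor.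
   + intro h. apply (proj1 (proj2 (proj2 Hw))), h.
 - split.
   + intro h. apply NNPP; intro nab.
     destruct (prime_ext T _ Hw _ _ nab) as [w' [hw' [inc [ha nb]]]].
     apply nb. apply (IHp2 (exist _ w' hw')). apply h; [exact inc|]. apply IHp1. exact ha.
   + intros h w' r ha. apply IHp2. apply IHp1 in ha.
     apply (w_mp T _ (proj2_sig w') _ _ ha). apply r, h.
 - rewrite IHp. simpl. split.
   + intro h. apply (proj1 Hw). apply B_box; auto.
   + intro h. apply NNPP; intro nb. apply B_nbox in nb; auto.
     apply (proj2 (proj2 (proj2 Hw))). apply (w_mp T _ Hw _ _ h). apply (proj1 Hw), nb.
Qed.

Lemma K_to_D Phi phi : Kr_conseq Phi phi -> L5_deriv Phi phi.
Proof.
 intro K. apply NNPP; intro nd.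
 destruct (lindenbaum L5_deriv L5_mono
   (fun F dir p d => L5_directed nat F 0 dir p d) Phi phi nd) as [T [h0 [nT mx]]].
 assert (Tcl : forall p, L5_deriv T p -> T p).
 { intros p d. apply mx. intro d2. apply nT. apply (d_mp _ p phi); [exact d|]. apply L5_ded, d2. }
 assert (HT : good T).
 { split; [exact Tcl|split].
   - intro p. apply NNPP; intro nn. apply nT.
     assert (L5_deriv (ext T p) phi) as d1 by (apply NNPP; intro c; apply nn; left; apply mx, c).
     assert (L5_deriv (ext T (Neg p)) phi) as d2 by (apply NNPP; intro c; apply nn; right; apply mx, c).
     apply L5_ded in d1. apply L5_ded in d2.
     apply (d_mp _ (Or p (Neg p))); [apply d_lem|].
     apply (d_mp _ (Imp (Neg p) phi)); [exact d2|].
     apply (d_mp _ (Imp p phi)); [exact d1|]. apply d_ax, ax_i, ipc_O3.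
   - intro hb. apply nT. apply (d_mp _ Bot); [apply d_hyp, hb|]. apply d_ax, ax_i, ipc_EFQ. }
 set (wB := exist _ (BB T) (B_world T HT) : CW T).
 set (wT := exist _ T (T_world T HT) : CW T).
 assert (F : is_L5_frame (CW T) (CR T) wB).
 { split; [exists wB; auto|split; [|split; [|split; [|split]]]].
   - intros w x h; exact h.
   - intros u v h1 h2. apply CW_ext. intro x; split; auto.
   - intros u v w h1 h2 x h. auto.
   - intros w x h. apply (proj1 (proj2_sig w)), h.
   - intros C Cch.
     set (U := fun x => BB T x \/ exists c, C c /\ proj1_sig c x).
     assert (HU : world T U).
     { split; [|split; [|split]].
       - intros x h; left; exact h.
       - intros p d.
         set (Fm := fun (i : option (CW T)) x => match i with
                   | None => BB T x
                   | Some c => BB T x \/ (C c /\ proj1_sig c x) end).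
         assert (dir : forall i j, exists k, (forall x, Fm i x -> Fm k x) /\ (forall x, Fm j x -> Fm k x)).
         { intros [c|] [d'|]; simpl.
           - destruct (classic (C c)) as [cc|cc]; [destruct (classic (C d')) as [cd|cd]|].
             + destruct (Cch c d' cc cd) as [r|r].
               * exists (Some d'); simpl; split; intros x [h|[h1 h2]]; auto.
               * exists (Some c); simpl; split; intros x [h|[h1 h2]]; auto.
             + exists (Some c); simpl; split; intros x [h|[h1 h2]]; auto; contradiction.
             + exists (Some d'); simpl; split; intros x [h|[h1 h2]]; auto; contradiction.
           - exists (Some c); simpl; split; auto.
           - exists (Some d'); simpl; split; auto.
           - exists None; simpl; split; auto. }
         destruct (IDer_directed _ Fm None dir p) as [[c|] dc].
         + eapply IDer_mono; [|exact d]. intros x [h|[c [h1 h2]]]; [exists None; exact h|exists (Some c); right; auto].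
         + simpl in dc. destruct (classic (C c)) as [cc|cc].
           * right. exists c. split; auto. apply (proj1 (proj2 (proj2_sig c))).
             eapply IDer_mono; [|exact dc]. intros x [h|[_ h]]; auto. apply (proj1 (proj2_sig c)), h.
           * left. apply B_IDer; auto. eapply IDer_mono; [|exact dc]. intros x [h|[h _]]; auto. contradiction.
         + left. apply B_IDer; auto.
       - intros a b [h|[c [hc h]]].
         + apply B_or in h; auto. destruct h; [left|right]; left; auto.
         + apply (proj1 (proj2 (proj2 (proj2_sig c)))) in h. destruct h; [left|right]; right; exists c; auto.
       - intros [h|[c [hc h]]]. + apply (B_cons T HT h). + apply (proj2 (proj2 (proj2 (proj2_sig c)))), h. }
     exists (exist _ U HU). intros c hc x h. simpl. right. exists c; auto. }
 assert (forces (CW T) (CR T) wB (Cg T) wT phi) as fp.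
 { apply K; auto.
   - intros x u v r h. apply r, h.
   - intros w r. apply CW_ext. intro x; split; [|apply r].
     intro h. apply NNPP; intro nx. destruct (proj1 (proj2 HT) x) as [y|y]; [contradiction|].
     apply r in y. apply (proj2 (proj2 (proj2 (proj2_sig w)))).
     apply (w_mp T _ (proj2_sig w) _ _ h y).
   - intros psi hpsi. apply (truth T HT). simpl. apply h0, hpsi. }
 apply (truth T HT) in fp. simpl in fp. apply nT, d_hyp, fp.
Qed.

Theorem corollary5p5 (Phi : formula -> Prop) (phi : formula) :
  (L5_deriv Phi phi <-> L5_conseq Phi phi) /\
  (L5_conseq Phi phi <-> Kr_conseq Phi phi).
Proof.
 split; split; intro h.
 - apply D_to_A, h.
 - apply K_to_D, A_to_K, h.
 - apply A_to_K, h.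
 - apply D_to_A, K_to_D, h.
Qed.
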